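(* Fix $\epsilon>0$ and let $\theta=\theta(n)\in[0,\epsilon]$ be any function. Then $$\frac{\mu_k}{k_1!\,k_2!}\ge b^{\theta n/2}\exp(o(n)),$$ i.e. there is a function $h(n)=o(n)$ with $\mu_k/(k_1!k_2!)\ge b^{\theta(n)n/2}e^{h(n)}$ for all $n$.
   Context: Let $p\in(0,1)$ be constant, $q=1-p$, $b=1/q$, $\gamma=2\log_b n-2\log_b\log_b n-2\log_b 2$, $\Delta=\gamma-\lfloor\gamma\rfloor$, and $x_0=x_0(n)$ the smallest nonnegative $x$ with $(1-\Delta+x)\log_b(1-\Delta+x)+(1-\Delta)(\Delta-x)/2\le0$. Let $k=\lceil n/(\gamma-x_0-\theta)\rceil$, $\delta=n/k-\lfloor n/k\rfloor$, $k_1=\delta k$, $k_2=(1-\delta)k$. An ordered $k$-equipartition of the vertex set $[n]$ is a sequence of $k$ disjoint sets covering $[n]$, the first $k_1$ of size $\lceil n/k\rceil$ and the remaining $k_2$ of size $\lfloor n/k\rfloor$. Let $P=n!/(\lceil n/k\rceil!^{k_1}\lfloor n/k\rfloor!^{k_2})$ be their number, $f=k_1\binom{\lceil n/k\rceil}{2}+k_2\binom{\lfloor n/k\rfloor}{2}$, and $\mu_k=Pq^f$, which is the expected number of ordered $k$-equipartitions all of whose parts are independent sets in $G\sim\mathcal{G}(n,p)$. *)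

(* Defs.v *)
From Stdlib Require Import Reals Lra Lia Arith.
Open Scope R_scope.

Definition qq (p : R) : R := 1 - p.
Definition bb (p : R) : R := 1 / qq p.
Definition logb (p x : R) : R := ln x / ln (bb p).

(* floor and ceiling on R (Int_part x = up x - 1 is the floor of x) *)
Definition floorR (x : R) : Z := Int_part x.
Definition ceilR (x : R) : Z := (- Int_part (- x))%Z.

Definition gam (p : R) (n : nat) : R :=
  2 * logb p (INR n) - 2 * logb p (logb p (INR n)) - 2 * logb p 2.
Definition Delta (p : R) (n : nat) : R := gam p n - IZR (floorR (gam p n)).

Definition Fx0 (p D x : R) : R :=
  (1 - D + x) * logb p (1 - D + x) + (1 - D) * (D - x) / 2.

Definition is_x0 (p : R) (n : nat) (x : R) : Prop :=
  0 <= x /\ Fx0 p (Delta p n) x <= 0 /\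
  (forall y, 0 <= y -> Fx0 p (Delta p n) y <= 0 -> x <= y).

Definition kk (p : R) (n : nat) (x0 th : R) : nat :=
  Z.to_nat (ceilR (INR n / (gam p n - x0 - th))).

(* With k parts: ceil(n/k) and floor(n/k); k1 = delta*k = n - k*floor(n/k),
   k2 = (1-delta)*k = k - k1. *)
Definition szfl (n k : nat) : nat := Nat.div n k.
Definition szcl (n k : nat) : nat := Z.to_nat (ceilR (INR n / INR k)).
Definition k1 (n k : nat) : nat := (n - k * Nat.div n k)%nat.
Definition k2 (n k : nat) : nat := (k - k1 n k)%nat.

Definition Pnum (n k : nat) : R :=
  INR (fact n) / (INR (fact (szcl n k)) ^ k1 n k * INR (fact (szfl n k)) ^ k2 n k).
Definition fedges (n k : nat) : nat :=
  (k1 n k * (szcl n k * (szcl n k - 1) / 2) + k2 n k * (szfl n k * (szfl n k - 1) / 2))%nat.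
Definition mu (p : R) (n k : nat) : R := Pnum n k * qq p ^ fedges n k.

(* Main.v *)
Require Import Defs.
From Stdlib Require Import Reals Lra Lia Arith ZArith.
Open Scope R_scope.

Lemma ln_le' x y : 0 < x -> x <= y -> ln x <= ln y.
Proof. intros Hx Hxy; destruct (Rle_lt_or_eq_dec _ _ Hxy) as [H|H].
- left; apply ln_increasing; auto.
- subst; lra. Qed.

Lemma ln_le_xm1 x : 0 < x -> ln x <= x - 1.
Proof. intros Hx. pose proof (exp_ineq1_le (ln x)). rewrite exp_ln in H; lra. Qed.

Lemma ln_le_sqrt x : 0 < x -> ln x <= 2 * sqrt x.
Proof. intros Hx.
  assert (Hs: 0 < sqrt x) by (apply sqrt_lt_R0; lra).
  assert (ln x = 2 * ln (sqrt x)).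
  { rewrite <- (sqrt_sqrt x) at 1 by lra. rewrite ln_mult by lra. ring. }
  rewrite H. pose proof (ln_le_xm1 _ Hs). lra. Qed.

Lemma exp_le' x y : x <= y -> exp x <= exp y.
Proof. intros H; destruct (Rle_lt_or_eq_dec _ _ H) as [H1|H1].
- left; apply exp_increasing; auto.
- subst; lra. Qed.

Lemma INR_fact_pos m : 0 < INR (fact m).
Proof. apply lt_0_INR, lt_O_fact. Qed.

Definition lf (m : nat) := ln (INR (fact m)).

Lemma lf_S m : lf (S m) = lf m + ln (INR (S m)).
Proof. unfold lf. rewrite fact_simpl, mult_INR, ln_mult.
  ring. apply lt_0_INR; lia. apply INR_fact_pos. Qed.

Lemma lf_lower m : (1 <= m)%nat -> INR m * ln (INR m) - INR m <= lf m.
Proof. induction m as [|m IH]; intros Hm; [lia|].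
  destruct (Nat.eq_dec m 0) as [->|Hm0].
  { simpl. unfold lf; simpl. rewrite ln_1. lra. }
  specialize (IH ltac:(lia)). rewrite lf_S, S_INR.
  assert (Hp: 0 < INR m) by (apply lt_0_INR; lia).
  assert (Hl: ln (INR m + 1) - ln (INR m) <= 1 / INR m).
  { assert (ln (INR m + 1) = ln (INR m) + ln ((INR m + 1)/INR m)).
    { rewrite <- ln_mult by (try apply Rdiv_lt_0_compat; lra). f_equal. field. lra. }
    pose proof (ln_le_xm1 ((INR m + 1)/INR m) ltac:(apply Rdiv_lt_0_compat; lra)).
    assert ((INR m + 1) / INR m - 1 = 1 / INR m) by (field; lra). lra. }
  assert (INR m * (ln (INR m + 1) - ln (INR m)) <= 1).
  { apply Rmult_le_compat_l with (r:=INR m) in Hl; [|lra].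
    replace (INR m * (1 / INR m)) with 1 in Hl by (field; lra). lra. }
  nra. Qed.

Lemma lf_upper m : (1 <= m)%nat -> lf m <= INR m * ln (INR m) - INR m + ln (INR m) + 1.
Proof. induction m as [|m IH]; intros Hm; [lia|].
  destruct (Nat.eq_dec m 0) as [->|Hm0].
  { simpl. unfold lf; simpl. rewrite ln_1. lra. }
  specialize (IH ltac:(lia)). rewrite lf_S, S_INR.
  assert (Hp: 0 < INR m) by (apply lt_0_INR; lia).
  assert (Hl: 1 / (INR m + 1) <= ln (INR m + 1) - ln (INR m)).
  { assert (ln (INR m) = ln (INR m + 1) + ln (INR m/(INR m + 1))).
    { rewrite <- ln_mult by (try apply Rdiv_lt_0_compat; lra). f_equal. field. lra. }
    pose proof (ln_le_xm1 (INR m/(INR m + 1)) ltac:(apply Rdiv_lt_0_compat; lra)).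
    assert (INR m / (INR m + 1) - 1 = - (1 / (INR m + 1))) by (field; lra). lra. }
  assert (1 <= (INR m + 1) * (ln (INR m + 1) - ln (INR m))).
  { apply Rmult_le_compat_l with (r:=INR m + 1) in Hl; [|lra].
    replace ((INR m + 1) * (1 / (INR m + 1))) with 1 in Hl by (field; lra). lra. }
  nra. Qed.

Lemma fact_mul_le a b : (fact a * fact b <= fact (a + b))%nat.
Proof. induction b as [|b IH].
- rewrite Nat.add_0_r; simpl; lia.
- rewrite Nat.add_succ_r. simpl fact. nia. Qed.
Lemma ceil_spec x : IZR (ceilR x) - 1 < x <= IZR (ceilR x).
Proof. unfold ceilR. destruct (base_Int_part (-x)). rewrite opp_IZR. lra. Qed.

Lemma ceil_char x m : IZR m - 1 < x <= IZR m -> ceilR x = m.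
Proof. intros [H1 H2]. unfold ceilR.
  assert (Int_part (- x) = (- m)%Z).
  { symmetry. apply Int_part_spec. rewrite opp_IZR. lra. }
  rewrite H. lia. Qed.

Lemma ceil_nat x : 0 < x -> INR (Z.to_nat (ceilR x)) = IZR (ceilR x) /\ (1 <= Z.to_nat (ceilR x))%nat.
Proof. intros Hx. destruct (ceil_spec x).
  assert (0 < IZR (ceilR x)) by lra. apply lt_0_IZR in H1.
  rewrite INR_IZR_INZ, Z2Nat.id by lia. split; [reflexivity|lia]. Qed.

Lemma szcl_eq n k : (0 < k)%nat -> (k1 n k <> 0)%nat -> szcl n k = S (szfl n k).
Proof. intros Hk H. unfold szcl, szfl, k1 in *.
  pose proof (Nat.div_mod n k ltac:(lia)). pose proof (Nat.mod_upper_bound n k ltac:(lia)).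
  set (a := (n / k)%nat) in *. set (r := (n mod k)%nat) in *.
  assert (Hr: (n - k * a = r)%nat) by lia.
  rewrite (ceil_char _ (Z.of_nat (S a))). { apply Nat2Z.id. }
  rewrite <- INR_IZR_INZ. assert (Hk': 0 < INR k) by (apply lt_0_INR; lia).
  rewrite H0, plus_INR, mult_INR, S_INR. split.
  - apply (Rmult_lt_reg_r (INR k)); auto. field_simplify; try lra.
    assert (0 < INR r) by (apply lt_0_INR; lia). nra.
  - apply (Rmult_le_reg_r (INR k)); auto. field_simplify; try lra.
    assert (INR r < INR k) by (apply lt_INR; lia). nra.
Qed.
Lemma x0_lt1 p n x : is_x0 p n x -> 0 <= x < 1.
Proof. intros [H0 [H1 H2]].
  assert (HD: 0 <= Defs.Delta p n < 1).
  { unfold Defs.Delta, floorR. destruct (base_Int_part (gam p n)). lra. }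
  assert (x <= Defs.Delta p n).
  { apply H2; [lra|]. unfold Fx0. replace (1 - Defs.Delta p n + Defs.Delta p n) with 1 by ring.
    unfold logb. rewrite ln_1. lra. }
  lra. Qed.
Lemma half_le m : INR (m * (m - 1) / 2) <= INR m * (INR m - 1) / 2.
Proof.
  pose proof (Nat.Div0.mul_div_le (m * (m - 1)) 2).
  apply le_INR in H. rewrite mult_INR in H. simpl (INR 2) in H.
  destruct m as [|m].
  - simpl. replace (0 * (0 - 1) / 2)%nat with 0%nat by reflexivity. simpl. lra.
  - replace (S m - 1)%nat with m in * by lia.
    rewrite mult_INR in H. rewrite S_INR in *. 
    assert (INR (S m * m / 2) * 2 <= (INR m + 1) * INR m).
    { lra. }
    replace (INR m + 1 - 1) with (INR m) by ring. lra.
Qed.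

Lemma fed_bound n k : (0 < k)%nat ->
  INR (fedges n k) <= (INR (k1 n k) * (INR (szfl n k) + 1) * INR (szfl n k)
     + INR (k2 n k) * INR (szfl n k) * (INR (szfl n k) - 1)) / 2.
Proof. intros Hk. unfold fedges. rewrite plus_INR, !mult_INR.
  pose proof (half_le (szcl n k)). pose proof (half_le (szfl n k)).
  assert (0 <= INR (k1 n k)) by apply pos_INR.
  assert (0 <= INR (k2 n k)) by apply pos_INR.
  assert (INR (k1 n k) * INR (szcl n k * (szcl n k - 1) / 2) <=
          INR (k1 n k) * ((INR (szfl n k) + 1) * INR (szfl n k)) / 2).
  { destruct (Nat.eq_dec (k1 n k) 0) as [E|E].
    - rewrite E. simpl. lra.
    - rewrite (szcl_eq n k Hk E) in H |- *. rewrite S_INR in H.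
      replace (INR (szfl n k) + 1 - 1) with (INR (szfl n k)) in H by ring.
      apply Rmult_le_compat_l with (r := INR (k1 n k)) in H; auto. lra. }
  nra.
Qed.
Lemma ln_LHS p n k : 0 < p < 1 ->
  let X := mu p n k / (INR (fact (k1 n k)) * INR (fact (k2 n k))) in
  0 < X /\ ln X = lf n - INR (k1 n k) * lf (szcl n k) - INR (k2 n k) * lf (szfl n k)
     + INR (fedges n k) * ln (qq p) - (lf (k1 n k) + lf (k2 n k)).
Proof. intros hp X.
  assert (Hq : 0 < qq p) by (unfold qq; lra).
  pose proof (INR_fact_pos n). pose proof (INR_fact_pos (k1 n k)).
  pose proof (INR_fact_pos (k2 n k)). pose proof (INR_fact_pos (szcl n k)).
  pose proof (INR_fact_pos (szfl n k)).
  assert (P1 : 0 < INR (fact (szcl n k)) ^ k1 n k) by (apply pow_lt; auto).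
  assert (P2 : 0 < INR (fact (szfl n k)) ^ k2 n k) by (apply pow_lt; auto).
  assert (P3 : 0 < qq p ^ fedges n k) by (apply pow_lt; auto).
  unfold X, mu, Pnum. unfold Rdiv. split.
  - repeat apply Rmult_lt_0_compat; auto; apply Rinv_0_lt_compat; auto; apply Rmult_lt_0_compat; auto.
  - rewrite !ln_mult; auto; try (apply Rinv_0_lt_compat; auto; apply Rmult_lt_0_compat; auto);
      try (repeat apply Rmult_lt_0_compat; auto; apply Rinv_0_lt_compat; auto; apply Rmult_lt_0_compat; auto).
    rewrite !ln_Rinv; auto; try (apply Rmult_lt_0_compat; auto).
    rewrite !ln_mult; auto. rewrite !ln_pow; auto. unfold lf. ring.
Qed.

Definition LL p := ln (bb p).
Definition U0 p eps := (6 + LL p * (1 + eps)) / LL p + 2.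
Definition uu p n := sqrt (ln (INR n) / LL p).
Definition K1 p eps := 8 + LL p * (1 + eps) + LL p.
Definition hfun p eps n :=
  - (INR n * K1 p eps / uu p n + 4 * uu p n + 2 + LL p + 2 * LL p * uu p n ^ 2).

Lemma LL_pos p : 0 < p < 1 -> 0 < LL p.
Proof. intros hp. unfold LL, bb, qq. rewrite <- ln_1. apply ln_increasing; [lra|].
  apply (Rmult_lt_reg_r (1-p)); [lra|]. field_simplify; lra. Qed.

Lemma lnq p : 0 < p < 1 -> ln (qq p) = - LL p.
Proof. intros hp. unfold LL, bb. unfold Rdiv. rewrite Rmult_1_l, ln_Rinv. ring.
  unfold qq; lra. Qed.

Lemma main_bound p eps th x0 n (hp : 0 < p < 1) (heps : 0 < eps)
  (hth : 0 <= th <= eps) (hx : is_x0 p n x0)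
  (hn : exp (LL p * U0 p eps ^ 2) <= INR n) (hn2 : (2 <= n)%nat) :
  let k := kk p n x0 th in
  mu p n k / (INR (fact (k1 n k)) * INR (fact (k2 n k)))
     >= Rpower (bb p) (th * INR n / 2) * exp (hfun p eps n).
Proof.
  intros k.
  pose proof (LL_pos p hp) as HL. set (L := LL p) in *.
  pose proof (x0_lt1 _ _ _ hx) as Hx0.
  set (nR := INR n).
  assert (HnR : 2 <= nR) by (unfold nR; replace 2 with (INR 2) by (simpl; ring); apply le_INR; auto).
  set (T := ln nR / L).
  set (u := uu p n).
  assert (HU0 : 2 <= U0 p eps).
  { unfold U0. fold L. assert (0 <= (6 + L * (1+eps)) / L).
    { unfold Rdiv; apply Rmult_le_pos; [nra| left; apply Rinv_0_lt_compat; auto]. } lra. }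
  set (v := U0 p eps) in *.
  assert (HT : L * v ^ 2 <= ln nR).
  { rewrite <- (ln_exp (L * v^2)). apply ln_le'; auto. apply exp_pos. }
  assert (HTv : v ^ 2 <= T).
  { unfold T. apply (Rmult_le_reg_r L); auto. field_simplify; lra. }
  assert (Hu2 : u * u = T).
  { unfold u, uu. apply sqrt_sqrt. fold L. fold nR. fold T. nra. }
  assert (Huv : v <= u).
  { unfold u, uu. fold L nR T. rewrite <- (sqrt_pow2 v) by lra. apply sqrt_le_1_alt. lra. }
  assert (HTpos : 4 <= T) by nra.
  assert (HlnT : ln T <= 2 * u).
  { rewrite <- Hu2. rewrite ln_mult by lra. pose proof (ln_le_xm1 u ltac:(lra)). lra. }
  assert (Hln2 : 0 < ln 2 <= 1).
  { split. rewrite <- ln_1; apply ln_increasing; lra.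
    pose proof (ln_le_xm1 2 ltac:(lra)). lra. }
  assert (Hv : L * v = 6 + L * (1 + eps) + 2 * L).
  { unfold v, U0. fold L. field. lra. }
  assert (Hgam : L * gam p n = 2 * L * T - 2 * ln T - 2 * ln 2).
  { unfold gam, logb. change (ln (bb p)) with L. fold nR. fold T. field. lra. }
  set (D := gam p n - x0 - th).
  assert (HLD : L * D = 2 * L * T - 2 * ln T - 2 * ln 2 - L * (x0 + th)).
  { unfold D. rewrite Rmult_minus_distr_l, Rmult_minus_distr_l, Hgam. ring. }
  assert (HlnT0 : 0 <= ln T). { rewrite <- ln_1. apply ln_le'; lra. }
  assert (HD2 : D <= 2 * T).
  { apply (Rmult_le_reg_l L); auto. nra. }
  assert (HLu : L * v * u <= L * u * u).
  { apply Rmult_le_compat_r; [lra|]. nra. }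
  assert (HD1 : T <= D).
  { apply (Rmult_le_reg_l L); auto. rewrite HLD.
    assert (L * (x0 + th) <= L * (1 + eps)) by (apply Rmult_le_compat_l; lra).
    assert (L * (1 + eps) <= L * (1 + eps) * u) by (assert (0 <= L*(1+eps)) by nra; nra).
    assert (HLT: L * T = L * u * u) by (rewrite <- Hu2; ring).
    assert (6 * u + L * (1 + eps) * u <= L * T).
    { rewrite HLT. rewrite Hv in HLu. assert (0 <= 2*L*u) by nra. nra. }
    lra. }
  assert (HDpos : 0 < D) by lra.
  assert (Hkdef : k = Z.to_nat (ceilR (nR / D))) by reflexivity.
  assert (HnD : 0 < nR / D) by (apply Rdiv_lt_0_compat; lra).
  destruct (ceil_nat _ HnD) as [HkR Hk1].
  rewrite <- Hkdef in HkR, Hk1.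
  pose proof (ceil_spec (nR / D)) as [Hc1 Hc2].
  rewrite <- HkR in Hc1, Hc2.
  set (kR := INR k) in *.
  assert (HnD4 : nR / D <= nR / 4).
  { apply Rmult_le_compat_l; [lra|]. apply Rinv_le_contravar; lra. }
  assert (Hkn : (k <= n)%nat).
  { apply INR_le. fold kR nR. lra. }
  assert (HkRpos : 1 <= kR) by (unfold kR; replace 1 with (INR 1) by reflexivity; apply le_INR; auto).
  set (a := szfl n k).
  pose proof (Nat.div_mod n k ltac:(lia)) as Hdm.
  pose proof (Nat.mod_upper_bound n k ltac:(lia)) as Hmb.
  assert (Ha1 : (1 <= a)%nat) by (unfold a, szfl; apply Nat.div_str_pos; lia).
  assert (Hk1e : k1 n k = (n mod k)%nat) by (unfold k1; fold (szfl n k); fold a; unfold a, szfl; lia).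
  assert (Hk12 : (k1 n k + k2 n k = k)%nat) by (unfold k2; lia).
  set (j1 := k1 n k) in *. set (j2 := k2 n k) in *.
  assert (Hn_eq : nR = kR * INR a + INR j1).
  { unfold nR, kR. rewrite <- mult_INR, <- plus_INR. f_equal. unfold a, szfl. lia. }
  assert (Hk_eq : kR = INR j1 + INR j2).
  { unfold kR. rewrite <- plus_INR. f_equal. lia. }
  assert (Hj1k : INR j1 < kR) by (unfold kR; apply lt_INR; lia).
  assert (HaR1 : 1 <= INR a) by (replace 1 with (INR 1) by reflexivity; apply le_INR; auto).
  assert (Hj1p : 0 <= INR j1) by apply pos_INR.
  assert (Hj2p : 0 <= INR j2) by apply pos_INR.
  assert (HnkD : nR / kR <= D).
  { apply (Rmult_le_reg_r kR); [lra|]. unfold Rdiv. rewrite Rmult_assoc, Rinv_l, Rmult_1_r by lra.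
    assert (nR = nR / D * D) by (field; lra). nra. }
  assert (Hak : INR a * kR <= nR) by lra.
  assert (HaD : INR a <= D).
  { apply Rle_trans with (nR / kR); auto. apply (Rmult_le_reg_r kR); [lra|].
    unfold Rdiv. rewrite Rmult_assoc, Rinv_l, Rmult_1_r by lra. lra. }
  pose proof (ln_LHS p n k hp) as [HX HlnX].
  set (X := mu p n k / (INR (fact (k1 n k)) * INR (fact (k2 n k)))) in *.
  fold j1 j2 in HlnX. change (szfl n k) with a in HlnX.
  assert (Hc : INR j1 * lf (szcl n k) = INR j1 * lf (S a)).
  { destruct (Nat.eq_dec j1 0) as [E|E].
    - rewrite E; simpl; ring.
    - unfold j1 in E. rewrite (szcl_eq n k ltac:(lia) E). reflexivity. }
  rewrite Hc, (lnq p hp) in HlnX. fold L in HlnX.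
  pose proof (fed_bound n k ltac:(lia)) as Hf. fold j1 j2 in Hf. change (szfl n k) with a in Hf.
  set (f := INR (fedges n k)) in *.
  set (aR := INR a) in *.
  change (mu p n k / (INR (fact j1) * INR (fact j2))) with X.
  unfold Rpower. rewrite <- exp_plus. rewrite <- (exp_ln X HX). apply Rle_ge, exp_le'.
  change (ln (bb p)) with L.
  unfold hfun, K1. fold L u. fold nR.
  set (lnn := ln nR) in *. set (lk := ln kR). set (la := ln (aR + 1)). set (lD := ln D).
  assert (Hlnn : lnn = L * T) by (unfold T; field; lra).
  assert (A1 := lf_lower n ltac:(lia)). fold nR lnn in A1.
  assert (A2 := lf_upper (S a) ltac:(lia)). rewrite S_INR in A2. fold aR la in A2.
  assert (A3 := lf_upper a ltac:(lia)). fold aR in A3.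
  assert (A4 : ln aR <= la) by (apply ln_le'; lra).
  assert (A5 : lf j1 + lf j2 <= kR * lk - kR + lk + 1).
  { apply Rle_trans with (lf k); [| apply lf_upper; lia].
    unfold lf. rewrite <- ln_mult by apply INR_fact_pos. apply ln_le'.
    apply Rmult_lt_0_compat; apply INR_fact_pos.
    rewrite <- mult_INR. apply le_INR. rewrite <- Hk12. apply fact_mul_le. }
  assert (A6 : INR j1 * lf (S a) + INR j2 * lf a <= nR * la - nR + kR * (la + 1)).
  { assert (INR j1 * lf (S a) <= INR j1 * ((aR + 1) * la - (aR + 1) + la + 1))
      by (apply Rmult_le_compat_l; lra).
    assert (INR j2 * lf a <= INR j2 * (aR * la - aR + la + 1)).
    { apply Rmult_le_compat_l; auto. assert (aR * ln aR <= aR * la) by (apply Rmult_le_compat_l; lra). lra. }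
    assert (E : nR * la - nR + kR * (la + 1) = INR j1 * ((aR + 1) * la - (aR + 1) + la + 1)
       + INR j2 * (aR * la - aR + la + 1)).
    { rewrite Hn_eq, Hk_eq. ring. }
    lra. }
  assert (Hkn' : kR <= nR) by (unfold kR, nR; apply le_INR; auto).
  assert (A7 : la <= lnn - lk + kR / nR).
  { assert (H1 : aR + 1 <= (nR + kR) / kR).
    { apply (Rmult_le_reg_r kR); [lra|]. unfold Rdiv. rewrite Rmult_assoc, Rinv_l, Rmult_1_r by lra. lra. }
    assert (H2 : la <= ln (nR + kR) - lk).
    { unfold la. apply Rle_trans with (ln ((nR + kR) / kR)). apply ln_le'; lra.
      unfold Rdiv. rewrite ln_mult, ln_Rinv by (try apply Rinv_0_lt_compat; lra). unfold lk. lra. }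
    assert (H3 : ln (nR + kR) <= lnn + kR / nR).
    { replace (nR + kR) with (nR * ((nR + kR) / nR)) by (field; lra).
      rewrite ln_mult by (try apply Rdiv_lt_0_compat; lra). fold lnn.
      pose proof (ln_le_xm1 ((nR + kR) / nR) ltac:(apply Rdiv_lt_0_compat; lra)).
      assert ((nR + kR) / nR - 1 = kR / nR) by (field; lra). lra. }
    lra. }
  assert (A8 : nR * la <= nR * lnn - nR * lk + kR).
  { apply Rmult_le_compat_l with (r := nR) in A7; [|lra].
    replace (nR * (lnn - lk + kR / nR)) with (nR * lnn - nR * lk + kR) in A7 by (field; lra). lra. }
  assert (A9 : la <= 4 * u).
  { apply Rle_trans with (ln (D + 1)). apply ln_le'; lra.
    apply Rle_trans with (2 * sqrt (D + 1)). apply ln_le_sqrt; lra.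
    assert (sqrt (D + 1) <= 2 * u); [|lra].
    rewrite <- (sqrt_square (2 * u)) by lra. apply sqrt_le_1_alt. nra. }
  assert (A10 : f <= nR * (D - 1) / 2 + kR / 8).
  { set (Sm := INR j1 * (aR + 1) * aR + INR j2 * aR * (aR - 1)) in Hf.
    assert (E : nR * (nR - kR) + kR * kR / 4 - kR * Sm = (INR j1 - kR / 2) ^ 2).
    { unfold Sm. rewrite Hn_eq, Hk_eq. field. }
    assert (E2 : nR <= D * kR).
    { apply (Rmult_le_reg_r (/ kR)). apply Rinv_0_lt_compat; lra.
      rewrite Rmult_assoc, Rinv_r, Rmult_1_r by lra. exact HnkD. }
    assert (E3 : nR * (nR - kR) <= nR * (D - 1) * kR).
    { replace (nR * (D - 1) * kR) with (nR * (D * kR - kR)) by ring.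
      apply Rmult_le_compat_l; lra. }
    assert (E4 : Sm * kR <= (nR * (D - 1) + kR / 4) * kR).
    { assert (0 <= (INR j1 - kR / 2) ^ 2) by (apply pow2_ge_0). nra. }
    apply Rmult_le_reg_r in E4; [|lra]. lra. }
  assert (A11 : lnn - lD <= lk).
  { assert (ln (nR / D) = lnn - lD).
    { unfold Rdiv. rewrite ln_mult, ln_Rinv by (try apply Rinv_0_lt_compat; lra). unfold lnn, lD. ring. }
    rewrite <- H. apply ln_le'; auto. }
  assert (A12 : 0 <= lD <= ln 2 + ln T).
  { split. unfold lD. rewrite <- ln_1. apply ln_le'; lra.
    rewrite <- ln_mult by lra. apply ln_le'; lra. }
  assert (A14 : lk <= lnn) by (apply ln_le'; lra).
  assert (S1 : nR * lnn - nR * la - kR * la - L * f - kR * lk - lk - 1 <= ln X).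
  { rewrite HlnX. lra. }
  assert (S2 : L * f <= L * (nR * (D - 1) / 2 + kR / 8)) by (apply Rmult_le_compat_l; lra).
  assert (S3 : (nR - kR) * (lnn - lD) <= (nR - kR) * lk) by (apply Rmult_le_compat_l; lra).
  assert (S4 : 0 <= kR * lD) by (apply Rmult_le_pos; lra).
  assert (S5 : nR * lD <= nR * (ln 2 + ln T)) by (apply Rmult_le_compat_l; lra).
  assert (S6 : kR * la <= kR * (4 * u)) by (apply Rmult_le_compat_l; lra).
  assert (S7 : nR * (L * D) = nR * (2 * lnn - 2 * ln T - 2 * ln 2 - L * (x0 + th))).
  { rewrite HLD, Hlnn. ring. }
  assert (S8 : 0 <= nR * L * x0) by (apply Rmult_le_pos; [apply Rmult_le_pos|]; lra).
  assert (R1 : nR * L * th / 2 + L * nR / 2 - kR * lnn - kR * (4 * u) - kR - L * kR / 8 - lk - 1 <= ln X).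
  { lra. }
  clear S1 S2 S3 S4 S5 S6 S7 A1 A2 A3 A5 A6 A7 A8 HlnX.
  set (w := nR / D) in *.
  assert (Hw : nR = w * D) by (unfold w; field; lra).
  assert (Hw0 : 0 <= w) by (unfold w; apply Rmult_le_pos; [lra|left; apply Rinv_0_lt_compat; lra]).
  set (Q := 2 * ln T + 2 * ln 2 + L * (x0 + th)).
  assert (HQ : L * D = 2 * L * T - Q) by (unfold Q; lra).
  assert (HQ1 : L * (x0 + th) <= L * (1 + eps)) by (apply Rmult_le_compat_l; lra).
  assert (HQM : Q <= 4 * u + 2 + L * (1 + eps)) by (unfold Q; lra).
  assert (HQ0 : 0 <= Q) by (unfold Q; assert (0 <= L * (x0+th)) by (apply Rmult_le_pos; lra); lra).
  assert (I1 : L * nR / 2 - w * (L * T) = - (w * Q) / 2) by (rewrite Hw; replace (L * (w * D)) with (w * (L * D)) by ring; rewrite HQ; field).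
  assert (HLT0 : 0 <= L * T) by (apply Rmult_le_pos; lra).
  assert (I2 : kR * lnn <= (w + 1) * (L * T)) by (rewrite Hlnn; apply Rmult_le_compat_r; lra).
  set (iu := / u).
  assert (Hiu : u * iu = 1) by (unfold iu; field; lra).
  assert (Hiu0 : 0 < iu) by (unfold iu; apply Rinv_0_lt_compat; lra).
  assert (Hiu1 : iu <= 1) by (unfold iu; rewrite <- Rinv_1; apply Rinv_le_contravar; lra).
  assert (I3 : w <= nR * iu * iu).
  { unfold w. replace (nR * iu * iu) with (nR / T) by (unfold iu; rewrite <- Hu2; field; lra).
    apply Rmult_le_compat_l; [lra|]. apply Rinv_le_contravar; lra. }
  assert (Hni : 0 <= nR * iu) by (apply Rmult_le_pos; lra).
  assert (Hi2 : iu * iu <= iu) by (rewrite <- (Rmult_1_r iu) at 3; apply Rmult_le_compat_l; lra).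
  assert (I4 : w * Q <= nR * iu * (6 + L * (1 + eps))).
  { apply Rle_trans with (nR * iu * iu * (4 * u + 2 + L * (1 + eps))).
    apply Rmult_le_compat; lra.
    assert (HE: nR * iu * iu * (4 * u + 2 + L * (1 + eps)) = nR * iu * (4 * (u * iu)) + (nR * (iu * iu)) * (2 + L * (1 + eps))) by ring.
    rewrite HE, Hiu.
    assert (nR * (iu * iu) * (2 + L * (1 + eps)) <= nR * iu * (2 + L * (1 + eps))).
    { apply Rmult_le_compat_r. assert (0 <= L*(1+eps)) by (apply Rmult_le_pos; lra). lra. apply Rmult_le_compat_l; lra. }
    lra. }
  assert (I5 : kR * (4 * u + 1 + L / 8) <= nR * iu * (5 + L / 8) + (4 * u + 1 + L / 8)).
  { apply Rle_trans with ((nR * iu * iu + 1) * (4 * u + 1 + L / 8)).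
    apply Rmult_le_compat_r; lra.
    assert (HE : (nR * iu * iu + 1) * (4 * u + 1 + L / 8) = nR * iu * (4 * (u * iu)) + nR * (iu * iu) * (1 + L / 8) + (4 * u + 1 + L / 8)) by ring.
    rewrite HE, Hiu.
    assert (nR * (iu * iu) * (1 + L / 8) <= nR * iu * (1 + L / 8)).
    { apply Rmult_le_compat_r. lra. apply Rmult_le_compat_l; lra. }
    lra. }
  assert (Hu2' : L * T = L * u ^ 2) by (rewrite <- Hu2; ring).
  assert (I6 : nR * iu * (L * (1 + eps)) >= 0) by (apply Rle_ge, Rmult_le_pos; [lra| apply Rmult_le_pos; lra]).
  assert (I7 : nR * iu * L >= 0) by (apply Rle_ge, Rmult_le_pos; lra).
  unfold Rdiv at 2. fold iu.
  assert (E8 : nR * (8 + L * (1 + eps) + L) * iu = nR * iu * 8 + nR * iu * (L * (1 + eps)) + nR * iu * L) by ring.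
  rewrite E8.
  assert (E9 : th * nR / 2 * L = nR * L * th / 2) . { field. } rewrite E9.
  assert (E10 : nR * iu * (6 + L * (1 + eps)) = nR * iu * 6 + nR * iu * (L * (1 + eps))) by ring.
  assert (E11 : nR * iu * (5 + L / 8) = nR * iu * 5 + nR * iu * L / 8) by field.
  assert (E12 : kR * (4 * u + 1 + L / 8) = kR * (4 * u) + kR + L * kR / 8) by field.
  assert (E13 : (w + 1) * (L * T) = w * (L * T) + L * T) by ring.
  lra.
Qed.

Lemma ev_ge (x : R) : exists N, forall n, (N <= n)%nat -> x <= INR n.
Proof.
  exists (Z.to_nat (up x)). intros n Hn. destruct (archimed x) as [H1 _].
  apply le_INR in Hn. destruct (Z_le_gt_dec 0 (up x)) as [Hz|Hz].
  - rewrite INR_IZR_INZ, Z2Nat.id in Hn by lia. lra.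
  - apply Z.gt_lt in Hz. apply IZR_lt in Hz. pose proof (pos_INR n). lra.
Qed.

Lemma ev_ge4 (a b c d : R) : exists N, forall n, (N <= n)%nat ->
  a <= INR n /\ b <= INR n /\ c <= INR n /\ d <= INR n.
Proof.
  destruct (ev_ge a) as [Na Ha]. destruct (ev_ge b) as [Nb Hb].
  destruct (ev_ge c) as [Nc Hc]. destruct (ev_ge d) as [Nd Hd].
  exists (Na + Nb + Nc + Nd)%nat. intros n Hn.
  repeat split; [apply Ha|apply Hb|apply Hc|apply Hd]; lia.
Qed.

Lemma u_ge p n M : 0 < p < 1 -> 0 <= M -> exp (LL p * M ^ 2) <= INR n -> M <= uu p n.
Proof. intros hp HM Hn. pose proof (LL_pos p hp).
  assert (0 < INR n) by (pose proof (exp_pos (LL p * M^2)); lra).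
  assert (LL p * M ^ 2 <= ln (INR n)).
  { rewrite <- (ln_exp (LL p * M^2)). apply ln_le'; auto. apply exp_pos. }
  unfold uu. rewrite <- (sqrt_pow2 M) by lra. apply sqrt_le_1_alt.
  apply (Rmult_le_reg_r (LL p)); auto. unfold Rdiv. rewrite Rmult_assoc, Rinv_l by lra. lra.
Qed.

Lemma hcv p eps : 0 < p < 1 -> 0 < eps -> Un_cv (fun n => hfun p eps n / INR n) 0.
Proof.
  intros hp heps e He. pose proof (LL_pos p hp) as HL. set (L := LL p) in *.
  set (K := K1 p eps).
  assert (HK : 0 < K) by (unfold K, K1; fold L; assert (0 <= L*(1+eps)) by (apply Rmult_le_pos; lra); lra).
  set (M := 1 + 4 * K / e).
  assert (HM : 1 <= M) by (unfold M; assert (0 <= 4*K/e) by (apply Rmult_le_pos; [lra| left; apply Rinv_0_lt_compat; lra]); lra).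
  set (C0 := 2 + L). set (C1 := 2 * (4 + 2 * L) / L).
  assert (HC1 : 0 < C1) by (unfold C1; apply Rdiv_lt_0_compat; lra).
  destruct (ev_ge4 (exp (L * M ^ 2)) (4 * C0 / e + 1) ((4 * C1 / e) ^ 2 + 1) 1) as [N HN].
  exists N. intros n Hn. destruct (HN n Hn) as [H1 [H2 [H3 H4]]].
  set (nR := INR n) in *.
  pose proof (u_ge p n M hp ltac:(lra) H1) as Hu. fold L in Hu. set (u := uu p n) in *.
  assert (Hu2 : u * u = ln nR / L).
  { unfold u, uu. fold L nR. apply sqrt_sqrt.
    assert (0 <= ln nR) by (rewrite <- ln_1; apply ln_le'; lra).
    apply Rmult_le_pos; [lra| left; apply Rinv_0_lt_compat; lra]. }
  assert (Hsq : ln nR <= 2 * sqrt nR) by (apply ln_le_sqrt; lra).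
  assert (Hs0 : 0 < sqrt nR) by (apply sqrt_lt_R0; lra).
  assert (Hsn : sqrt nR * sqrt nR = nR) by (apply sqrt_sqrt; lra).
  assert (Hsb : 4 * C1 / e <= sqrt nR).
  { rewrite <- (sqrt_pow2 (4 * C1 / e)). apply sqrt_le_1_alt; lra.
    apply Rmult_le_pos; [lra| left; apply Rinv_0_lt_compat; lra]. }
  unfold R_dist. rewrite Rminus_0_r.
  unfold hfun. fold L u nR. fold K.
  assert (T1 : K / u < e / 2).
  { apply (Rmult_lt_reg_r u); [lra|]. unfold Rdiv. rewrite Rmult_assoc, Rinv_l, Rmult_1_r by lra.
    assert (e * M = e + 4 * K) by (unfold M; field; lra). nra. }
  assert (T1' : 0 <= K / u) by (apply Rmult_le_pos; [lra| left; apply Rinv_0_lt_compat; lra]).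
  set (B := 4 * u + 2 + L + 2 * L * u ^ 2).
  assert (HB0 : 0 <= B) by (unfold B; assert (0 <= L * u^2) by (apply Rmult_le_pos; nra); lra).
  assert (HBb : B <= C0 + C1 * sqrt nR).
  { unfold B, C0, C1. assert (u <= u * u) by nra.
    assert (L * u ^ 2 = ln nR) by (rewrite <- (Rmult_1_r (ln nR)), <- (Rinv_r L) by lra; simpl; rewrite Rmult_1_r, Hu2; field; lra).
    assert (4 * u <= 4 * (ln nR / L)) by lra.
    assert (4 * (ln nR / L) + 2 * ln nR <= 2 * (4 + 2 * L) / L * sqrt nR).
    { replace (4 * (ln nR / L) + 2 * ln nR) with ((4 + 2 * L) / L * ln nR) by (field; lra).
      replace (2 * (4 + 2 * L) / L * sqrt nR) with ((4 + 2 * L) / L * (2 * sqrt nR)) by (field; lra).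
      apply Rmult_le_compat_l; [apply Rmult_le_pos; [lra| left; apply Rinv_0_lt_compat; lra] | lra]. }
    lra. }
  assert (T2 : B / nR < e / 2).
  { apply (Rmult_lt_reg_r nR); [lra|]. unfold Rdiv. rewrite Rmult_assoc, Rinv_l, Rmult_1_r by lra.
    assert (C0 * 4 < e * nR).
    { assert (4 * C0 / e * e = 4 * C0) by (field; lra). nra. }
    assert (C1 * sqrt nR * 4 <= e * nR).
    { assert (4 * C1 / e * e = 4 * C1) by (field; lra).
      assert (4 * C1 / e * e <= sqrt nR * e) by (apply Rmult_le_compat_r; lra).
      assert (HH : 4 * C1 * sqrt nR <= sqrt nR * e * sqrt nR) by (apply Rmult_le_compat_r; lra).
      replace (sqrt nR * e * sqrt nR) with (e * (sqrt nR * sqrt nR)) in HH by ring.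
      rewrite Hsn in HH. lra. }
    lra. }
  assert (E : - (nR * K / u + 4 * u + 2 + L + 2 * L * u ^ 2) / nR = - (K / u + B / nR)) by (unfold B; field; lra).
  rewrite E. rewrite Rabs_Ropp, Rabs_right.
  - lra.
  - apply Rle_ge. apply Rplus_le_le_0_compat; auto. apply Rmult_le_pos; [lra| left; apply Rinv_0_lt_compat; lra].
Qed.

Theorem mainTheorem9 (p eps : R) (hp : 0 < p < 1) (heps : 0 < eps)
  (theta : nat -> R) (htheta : forall n, 0 <= theta n <= eps)
  (x0 : nat -> R) (hx0 : forall n, is_x0 p n (x0 n)) :
  exists h : nat -> R,
    Un_cv (fun n => h n / INR n) 0 /\
    exists N : nat, forall n : nat, (N <= n)%nat ->
      let k := kk p n (x0 n) (theta n) in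
      mu p n k / (INR (fact (k1 n k)) * INR (fact (k2 n k)))
        >= Rpower (bb p) (theta n * INR n / 2) * exp (h n).
Proof.
  exists (hfun p eps). split. apply hcv; auto.
  destruct (ev_ge4 (exp (LL p * U0 p eps ^ 2)) 2 0 0) as [N HN].
  exists N. intros n Hn. destruct (HN n Hn) as [H1 [H2 _]].
  apply main_bound; auto.
  apply INR_le. simpl. lra.
Qed.
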